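(* There exists a (finite, eight-element) left-residuated po-groupoid $\mathbf G$ which satisfies the divisibility law $(x/y)\cdot y=(y/x)\cdot x$ and the double negation law $\neg\neg x=x$, but does not satisfy the equation $x\cdot y=\neg(\neg x/y)$, and for which $\mathbf A(\mathbf G)=(G,\oplus,\neg,0)$ with $x\oplus y=\neg(\neg x\cdot\neg y)$ is not a basic algebra (it violates $\neg(\neg x\oplus y)\oplus y=\neg(\neg y\oplus x)\oplus x$).
   Context: A (bounded integral) left-residuated po-groupoid is a structure $\mathbf G=(G,\le,\cdot,/,0,1)$ where $(G,\le,0,1)$ is a bounded poset with least element $0$ and greatest element $1$, $\cdot$ is a binary operation on $G$ with $1\cdot x=x\cdot 1=x$ for all $x$ (no associativity, commutativity or monotonicity is assumed), and $/$ is a binary operation on $G$ satisfying the left residuation law: for all $x,y,z\in G$, $x\cdot y\le z\iff x\le z/y$. The negation is $\neg x:=0/x$. A basic algebra is an algebra $(A,\oplus,\neg,0)$ of type $(2,1,0)$ satisfying $x\oplus 0=x$; $\neg\neg x=x$; $\neg(\neg x\oplus y)\oplus y=\neg(\neg y\oplus x)\oplus x$; $\neg(\neg(\neg(x\oplus y)\oplus y)\oplus z)\oplus(x\oplus z)=\neg 0$. *)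

(* Defs.v *)
From mathcomp Require Import all_boot.
Set Implicit Arguments. Unset Strict Implicit. Unset Printing Implicit Defensive.

Definition is_lrpog (T : Type) (le : rel T) (mul div : T -> T -> T)
    (zero one : T) : Prop :=
  (forall x, le x x) /\
  (forall x y, le x y -> le y x -> x = y) /\
  (forall x y z, le x y -> le y z -> le x z) /\
  (forall x, le zero x /\ le x one) /\
  (forall x, mul one x = x /\ mul x one = x) /\
  (forall x y z, le (mul x y) z <-> le x (div z y)).

Definition lneg (T : Type) (div : T -> T -> T) (zero : T) (x : T) : T :=
  div zero x.

Definition loplus (T : Type) (mul div : T -> T -> T) (zero : T) (x y : T) : T :=
  lneg div zero (mul (lneg div zero x) (lneg div zero y)).

Definition is_basic_algebra (A : Type) (oplus : A -> A -> A) (neg : A -> A)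
    (zero : A) : Prop :=
  [/\ (forall x, oplus x zero = x),
      (forall x, neg (neg x) = x),
      (forall x y, oplus (neg (oplus (neg x) y)) y = oplus (neg (oplus (neg y) x)) x)
    & (forall x y z,
         oplus (neg (oplus (neg (oplus (neg (oplus x y)) y)) z)) (oplus x z)
         = neg zero)].

(* Main.v *)
Require Import Defs.
From mathcomp Require Import all_boot.

Definition leT : seq (seq nat) := [:: [:: 1; 1; 1; 1; 1; 1; 1; 1]; [:: 0; 1; 0; 0; 1; 1; 1; 1]; [:: 0; 0; 1; 0; 1; 0; 0; 1]; [:: 0; 0; 0; 1; 1; 0; 0; 1]; [:: 0; 0; 0; 0; 1; 0; 0; 1]; [:: 0; 0; 0; 0; 0; 1; 0; 1]; [:: 0; 0; 0; 0; 0; 0; 1; 1]; [:: 0; 0; 0; 0; 0; 0; 0; 1]].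
Definition mulT : seq (seq nat) := [:: [:: 0; 0; 0; 0; 0; 0; 0; 0]; [:: 0; 0; 0; 0; 0; 1; 1; 1]; [:: 0; 0; 2; 3; 2; 0; 1; 2]; [:: 0; 0; 2; 3; 2; 1; 0; 3]; [:: 0; 0; 2; 3; 2; 1; 1; 4]; [:: 0; 1; 0; 3; 3; 5; 6; 5]; [:: 0; 1; 2; 0; 1; 5; 6; 6]; [:: 0; 1; 2; 3; 4; 5; 6; 7]].
Definition divT : seq (seq nat) := [:: [:: 7; 4; 5; 6; 1; 2; 3; 0]; [:: 7; 7; 5; 6; 6; 4; 4; 1]; [:: 7; 4; 7; 6; 4; 2; 3; 2]; [:: 7; 4; 5; 7; 5; 2; 3; 3]; [:: 7; 7; 7; 7; 7; 4; 4; 4]; [:: 7; 7; 5; 6; 6; 7; 4; 5]; [:: 7; 7; 5; 6; 6; 4; 7; 6]; [:: 7; 7; 7; 7; 7; 7; 7; 7]].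

Definition E := 'I_8.
Definition mk (n : nat) : E :=
  match n with
  | 0 => @Ordinal 8 0 isT
  | 1 => @Ordinal 8 1 isT
  | 2 => @Ordinal 8 2 isT
  | 3 => @Ordinal 8 3 isT
  | 4 => @Ordinal 8 4 isT
  | 5 => @Ordinal 8 5 isT
  | 6 => @Ordinal 8 6 isT
  | _ => @Ordinal 8 7 isT
  end.
Definition tab (t : seq (seq nat)) (x y : E) : nat := nth 0 (nth [::] t x) y.
Definition leE : rel E := fun x y => tab leT x y == 1.
Definition mulE (x y : E) : E := mk (tab mulT x y).
Definition divE (x y : E) : E := mk (tab divT x y).
Definition z0 : E := mk 0.
Definition o1 : E := mk 7.

Definition enE : seq E := [:: mk 0; mk 1; mk 2; mk 3; mk 4; mk 5; mk 6; mk 7].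
Lemma inE' (x : E) : x \in enE.
Proof. case: x => m Hm; do 8 (case: m Hm => [|m] Hm; first by []). by []. Qed.

Lemma c_refl : all (fun x => leE x x) enE. Proof. by vm_compute. Qed.
Lemma c_anti : all (fun x => all (fun y => leE x y ==> leE y x ==> (x == y)) enE) enE. Proof. by vm_compute. Qed.
Lemma c_trans : all (fun x => all (fun y => all (fun z => leE x y ==> leE y z ==> leE x z) enE) enE) enE. Proof. by vm_compute. Qed.
Lemma c_bnd : all (fun x => leE z0 x && leE x o1) enE. Proof. by vm_compute. Qed.
Lemma c_unit : all (fun x => (mulE o1 x == x) && (mulE x o1 == x)) enE. Proof. by vm_compute. Qed.
Lemma c_res : all (fun x => all (fun y => all (fun z => leE (mulE x y) z == leE x (divE z y)) enE) enE) enE. Proof. by vm_compute. Qed.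
Lemma c_div : all (fun x => all (fun y => mulE (divE x y) y == mulE (divE y x) x) enE) enE. Proof. by vm_compute. Qed.
Lemma c_dn : all (fun x => divE z0 (divE z0 x) == x) enE. Proof. by vm_compute. Qed.

Theorem mainTheorem9 :
  exists (T : finType) (le : rel T) (mul div : T -> T -> T) (zero one : T),
    #|T| = 8 /\
    is_lrpog le mul div zero one /\
    (forall x y, mul (div x y) y = mul (div y x) x) /\
    (forall x, lneg div zero (lneg div zero x) = x) /\
    ~ (forall x y, mul x y = lneg div zero (div (lneg div zero x) y)) /\
    ~ is_basic_algebra (loplus mul div zero) (lneg div zero) zero /\
    ~ (forall x y,
             loplus mul div zero (lneg div zero (loplus mul div zero (lneg div zero x) y)) y
             = loplus mul div zero (lneg div zero (loplus mul div zero (lneg div zero y) x)) x).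
Proof.
have bad : ~ (forall x y : E,
   loplus mulE divE z0 (lneg divE z0 (loplus mulE divE z0 (lneg divE z0 x) y)) y
   = loplus mulE divE z0 (lneg divE z0 (loplus mulE divE z0 (lneg divE z0 y) x)) x).
  move=> H; move: (H (mk 1) (mk 2)); by vm_compute.
exists E, leE, mulE, divE, z0, o1.
split; first by rewrite card_ord.
split.
  split; first by move=> x; exact: (allP c_refl x (inE' x)).
  split; first by move=> x y h1 h2; apply/eqP; move: (allP (allP c_anti x (inE' x)) y (inE' y)); rewrite h1 h2.
  split; first by move=> x y z h1 h2; move: (allP (allP (allP c_trans x (inE' x)) y (inE' y)) z (inE' z)); rewrite h1 h2.
  split; first by move=> x; apply/andP; exact: (allP c_bnd x (inE' x)).
  split; first by move=> x; case/andP: (allP c_unit x (inE' x)) => /eqP -> /eqP ->.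
  by move=> x y z; rewrite (eqP (allP (allP (allP c_res x (inE' x)) y (inE' y)) z (inE' z))).
split; first by move=> x y; apply/eqP; exact: (allP (allP c_div x (inE' x)) y (inE' y)).
split; first by move=> x; apply/eqP; exact: (allP c_dn x (inE' x)).
split; first by move=> H; move: (H (mk 2) (mk 4)); vm_compute.
split; last exact: bad.
by case=> _ _ h _; apply: bad.
Qed.
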